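(* Let $x_0>0$ and $v_0>0$. For each $\alpha\in[-\pi,\pi]$, consider the closed curve $$E_\alpha:\quad x = x_0 \cos t + v_0 \cos \alpha \,\sin t,\qquad y = v_0 \sin \alpha\, \sin t,\qquad 0 \le t \le 2\pi,$$ which is the trajectory of the planar free harmonic oscillator $x''+x=0,\ y''+y=0$ with initial position $(x_0,0)$ and initial velocity $(v_0\cos\alpha, v_0\sin\alpha)$. It is an ellipse centered at the origin, or a segment when $\sin\alpha=0$. Then, as $\alpha$ ranges over $[-\pi,\pi]$, the foci of the curves $E_\alpha$ trace the Cassini oval with Cartesian equation $$[(x + x_0)^2 + y^2]\,[(x - x_0)^2 + y^2] = v_0^4,$$ equivalently $$(x^2 + y^2)^2 - 2x_0^2(x^2 - y^2) = v_0^4 - x_0^4,$$ and polar equation $$r^4 - 2x_0^2 r^2 \cos 2\theta = v_0^4 - x_0^4 .$$ This Cassini oval lies symmetrically inside the ellipse of safety $$\frac{x^2}{x_0^2+v_0^2}+\frac{y^2}{v_0^2}=1 .$$ In particular, when $x_0 = v_0$ the locus of the foci is Bernoulli's lemniscate, with Cartesian equation $$(x^2 + y^2)^2 = 2x_0^2(x^2 - y^2)$$ and polar equation $$r^2 = 2x_0^2 \cos 2\theta,\qquad -\tfrac{\pi}{4}\le\theta\le\tfrac{\pi}{4}.$$ Moreover, in this case $\alpha = 2\theta$, where $\theta$ is the polar angle of the focus, so the lemniscate is given by $$r^2 = 2x_0^2\cos\alpha,\qquad -\tfrac{\pi}{2}\le\alpha\le\tfrac{\pi}{2}.$$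
   Context: The ellipse of safety is the envelope of the family of curves $E_\alpha$: its complement's exterior is the set of points not reached by any trajectory. When $\sin\alpha=0$ the curve $E_\alpha$ degenerates to the segment from $(-\sqrt{x_0^2+v_0^2},0)$ to $(\sqrt{x_0^2+v_0^2},0)$, and its foci are taken to be the endpoints of that segment. A Cassini oval with foci $(\pm\lambda,0)$ is the set of points whose distances to these two foci have constant product $\mu^2$. Polar coordinates are $x=r\cos\theta$, $y=r\sin\theta$. *)

(* Defs.v *)
From Stdlib Require Import Reals Lra.
Open Scope R_scope.

Definition dist2 (P Q : R * R) : R :=
  sqrt ((fst P - fst Q) ^ 2 + (snd P - snd Q) ^ 2).

Definition E (x0 v0 a : R) (P : R * R) : Prop :=
  exists t, 0 <= t <= 2 * PI /\
    P = (x0 * cos t + v0 * cos a * sin t, v0 * sin a * sin t).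

(* For a genuine ellipse this is the
   classical notion of focus; when s = dist F F' the locus is exactly the
   segment [F, F'], whose foci are then its endpoints (the paper's
   convention for the degenerate case sin a = 0). *)
Definition is_focus (C : R * R -> Prop) (F : R * R) : Prop :=
  exists (F' : R * R) (s : R), forall P, C P <-> dist2 P F + dist2 P F' = s.

Definition foci_locus (x0 v0 : R) (F : R * R) : Prop :=
  exists a, -PI <= a <= PI /\ is_focus (E x0 v0 a) F.

Definition cassini (x0 v0 : R) (P : R * R) : Prop :=
  ((fst P + x0) ^ 2 + snd P ^ 2) * ((fst P - x0) ^ 2 + snd P ^ 2) = v0 ^ 4.

(* Main.v *)
Require Import Defs.
From Stdlib Require Import Reals Lra Psatz Classical.
From Coquelicot Require Import Complex.
Open Scope R_scope.

Lemma sq_pos (x : R) : x <> 0 -> 0 < x^2.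
Proof. intros h. destruct (Rtotal_order x 0) as [h'|[h'|h']]; [nra|contradiction|nra]. Qed.

Lemma core (x0 v0 ca sa m1 m2 k : R) : 0<x0 -> 0<v0 -> ca^2+sa^2=1 -> sa <> 0 ->
 m1^2+m2^2 <= 1 ->
 x0^2*(1-m1^2) = k^2*(1-m1^2-m2^2) ->
 v0^2*(1-(m1*ca+m2*sa)^2) = k^2*(1-m1^2-m2^2) ->
 ca*(1-m1^2) = m1*m2*sa ->
 ((k*m1 + x0) ^ 2 + (k*m2) ^ 2) * ((k*m1 - x0) ^ 2 + (k*m2) ^ 2) = v0 ^ 4.
Proof.
intros hx hv hc hs hm h1 h2 h3.
assert (hsa2 : 0 < sa^2) by (apply sq_pos; auto).
set (N := 1-m1^2-m2^2) in *.
assert (hN : 0 < N).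
{ destruct (Rle_lt_or_eq_dec 0 N) as [?|e]; [unfold N; lra|lra|].
  exfalso. rewrite <- e in h1, h2. rewrite Rmult_0_r in h1, h2.
  assert (e1 : m1^2 = 1).
  { assert (0 < x0^2) by nra.
    apply Rmult_integral in h1. destruct h1; lra. }
  assert (e2 : m2 = 0) by (unfold N in e; nra).
  subst m2. assert (e3 : (m1*ca+0*sa)^2 = ca^2) by (replace ((m1*ca+0*sa)^2) with (m1^2*ca^2) by ring; rewrite e1; ring).
  rewrite e3 in h2. assert (0 < v0^2) by nra.
  apply Rmult_integral in h2. destruct h2; lra. }
assert (hM : 0 < 1 - m1^2) by (unfold N in hN; nra).
set (D2 := m1^2*m2^2 + (1-m1^2)^2).
assert (hD : sa^2*D2 = (1-m1^2)^2).
{ unfold D2. replace (sa^2*(m1^2*m2^2 + (1-m1^2)^2)) with ((m1*m2*sa)^2 + sa^2*(1-m1^2)^2) by ring.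
  rewrite <- h3. replace ((ca*(1-m1^2))^2 + sa^2*(1-m1^2)^2) with ((ca^2+sa^2)*(1-m1^2)^2) by ring.
  rewrite hc. ring. }
assert (hL : (m1*ca+m2*sa)*(1-m1^2) = m2*sa).
{ replace ((m1*ca+m2*sa)*(1-m1^2)) with (m1*(ca*(1-m1^2)) + m2*sa*(1-m1^2)) by ring.
  rewrite h3. ring. }
assert (hV : v0^2*sa^2 = k^2*(1-m1^2)).
{ assert (e : v0^2*sa^2*(1-m1^2)*N = k^2*(1-m1^2)*(1-m1^2)*N).
  { transitivity (v0^2*(1-(m1*ca+m2*sa)^2)*(1-m1^2)^2).
    - replace (v0^2*(1-(m1*ca+m2*sa)^2)*(1-m1^2)^2) with
        (v0^2*((1-m1^2)^2 - ((m1*ca+m2*sa)*(1-m1^2))^2)) by ring.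
      rewrite hL, <- hD. unfold D2, N. ring.
    - rewrite h2. ring. }
  apply Rmult_eq_reg_r with ((1-m1^2)*N); [|nra]. lra. }
assert (hid : ((m1^2+m2^2)*(1-m1^2)+N)^2 - 4*N*(1-m1^2)*m1^2 = D2^2) by (unfold D2, N; ring).
assert (hpos : 0 < sa^4*(1-m1^2)^2).
{ replace (sa^4*(1-m1^2)^2) with ((sa^2)*(sa^2)*((1-m1^2)*(1-m1^2))) by ring.
  apply Rmult_lt_0_compat; apply Rmult_lt_0_compat; auto. }
apply Rmult_eq_reg_r with (sa^4*(1-m1^2)^2); [|lra].
transitivity (k^4*(1-m1^2)^4).
- transitivity (sa^4*(((k^2*(m1^2+m2^2)*(1-m1^2) + x0^2*(1-m1^2))^2 - 4*(x0^2*(1-m1^2))*(1-m1^2)*k^2*m1^2))).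
  + ring.
  + rewrite h1. replace (k^2*(m1^2+m2^2)*(1-m1^2) + k^2*N) with (k^2*((m1^2+m2^2)*(1-m1^2)+N)) by ring.
    replace (sa^4 * ((k^2*((m1^2+m2^2)*(1-m1^2)+N))^2 - 4*(k^2*N)*(1-m1^2)*k^2*m1^2))
      with (k^4*sa^4*(((m1^2+m2^2)*(1-m1^2)+N)^2 - 4*N*(1-m1^2)*m1^2)) by ring.
    rewrite hid. replace (k^4*sa^4*D2^2) with (k^4*(sa^2*D2)^2) by ring. rewrite hD. ring.
- replace (v0^4*(sa^4*(1-m1^2)^2)) with ((v0^2*sa^2)^2*(1-m1^2)^2) by ring.
  rewrite hV. ring.
Qed.

Definition ee (th : R) : C := (cos th, sin th).

Lemma Cext (a b : C) : fst a = fst b -> snd a = snd b -> a = b.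
Proof. destruct a, b; simpl; intros; subst; auto. Qed.

Lemma ee_mult th1 th2 : (ee th1 * ee th2 = ee (th1 + th2))%C.
Proof. unfold ee, Cmult; simpl. rewrite cos_plus, sin_plus. f_equal; ring. Qed.

Lemma ee_conj th : (ee th * ee (-th) = 1)%C.
Proof. rewrite ee_mult, Rplus_opp_r; unfold ee; rewrite cos_0, sin_0; reflexivity. Qed.

Lemma ee_Cconj th : Cconj (ee th) = ee (-th).
Proof. unfold ee, Cconj; simpl. rewrite cos_neg, sin_neg. reflexivity. Qed.

Lemma cs1 th : cos th ^2 + sin th ^2 = 1.
Proof. pose proof (sin2_cos2 th). unfold Rsqr in *. nra. Qed.

Lemma Cmod_ee th : Cmod (ee th) = 1.
Proof. unfold Cmod, ee; cbn [fst snd]. rewrite cs1. apply sqrt_1. Qed.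

Lemma Ci2 : (Ci * Ci = - RtoC 1)%C.
Proof. apply Cext; simpl; ring. Qed.

Lemma csqrt (z : C) : exists w : C, (w * w = z)%C.
Proof.
destruct z as [a b].
set (m := sqrt (a^2+b^2)).
assert (hm0 : 0 <= m) by apply sqrt_pos.
assert (hm2 : m*m = a^2+b^2) by (apply sqrt_sqrt; nra).
assert (hma : 0 <= m + a) by nra.
assert (hmb : 0 <= m - a) by nra.
set (x := sqrt ((m+a)/2)).
set (y := sqrt ((m-a)/2)).
assert (hx : x*x = (m+a)/2) by (apply sqrt_sqrt; lra).
assert (hy : y*y = (m-a)/2) by (apply sqrt_sqrt; lra).
assert (hxy0 : 0 <= x*y) by (apply Rmult_le_pos; apply sqrt_pos).
assert (hxy : (2*(x*y))^2 = b^2).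
{ replace ((2*(x*y))^2) with (4*(x*x)*(y*y)) by ring. rewrite hx, hy. nra. }
destruct (Rle_lt_dec 0 b) as [hb|hb].
- exists (x, y). apply Cext; simpl.
  + rewrite hx, hy. lra.
  + assert (e : 2*(x*y) = b) by nra. lra.
- exists (x, -y). apply Cext; simpl.
  + ring_simplify. replace (x^2) with (x*x) by ring. replace (y^2) with (y*y) by ring. rewrite hx, hy. lra.
  + assert (e : 2*(x*y) = -b) by nra. lra.
Qed.

Lemma sq_cases (w v : C) : (w*w = v*v)%C -> w = v \/ w = (-v)%C.
Proof.
intros h. destruct (classic (w - v = 0)%C) as [e|e].
- left. transitivity ((w - v) + v)%C; [ring|]. rewrite e. ring.
- right. assert (e2 : ((w - v) * (w + v) = 0)%C).
  { transitivity (w*w - v*v)%C; [ring|]. rewrite h. ring. }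
  assert (e3 : (w + v = 0)%C).
  { transitivity (/(w-v) * ((w - v) * (w + v)))%C; [field; auto|]. rewrite e2. ring. }
  transitivity ((w + v) - v)%C; [ring|]. rewrite e3. ring.
Qed.

Lemma Cmod_sq (w : C) : Cmod (w * w) = Cmod w ^ 2.
Proof. rewrite Cmod_mult. ring. Qed.

Lemma Cmod2 (w : C) : Cmod w ^ 2 = fst w ^ 2 + snd w ^ 2.
Proof. unfold Cmod. rewrite pow2_sqrt; [reflexivity|]. nra. Qed.

Lemma para (a b : C) : Cmod (a - b) ^ 2 + Cmod (a + b) ^ 2 = 2 * (Cmod a ^ 2 + Cmod b ^ 2).
Proof. rewrite !Cmod2. destruct a, b; simpl. ring. Qed.

Lemma angle0 (c s : R) : c^2 + s^2 = 1 -> 0 <= s -> exists th, 0 <= th <= PI /\ cos th = c /\ sin th = s.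
Proof.
intros h hs. assert (hc : -1 <= c <= 1) by nra.
exists (acos c). split; [apply acos_bound|]. split; [apply cos_acos; auto|].
rewrite sin_acos; auto. replace (1 - c²) with (s^2) by (unfold Rsqr; lra).
apply sqrt_pow2; auto.
Qed.

Lemma angle1 (c s : R) : c^2 + s^2 = 1 -> exists th, -PI <= th <= PI /\ cos th = c /\ sin th = s.
Proof.
intros h. destruct (Rle_lt_dec 0 s) as [hs|hs].
- destruct (angle0 c s h hs) as [th [h1 [h2 h3]]]. exists th. pose proof PI_RGT_0. repeat split; lra.
- destruct (angle0 c (-s)) as [th [h1 [h2 h3]]]; [nra|lra|].
  exists (-th). rewrite cos_neg, sin_neg. repeat split; lra.
Qed.

Lemma angle2 (c s : R) : c^2 + s^2 = 1 -> exists t, 0 <= t <= 2*PI /\ cos t = c /\ sin t = s.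
Proof.
intros h. destruct (angle1 (-c) (-s)) as [th [h1 [h2 h3]]]; [nra|].
exists (th + PI). rewrite cos_plus, sin_plus, cos_PI, sin_PI. repeat split; lra.
Qed.

Lemma sq_inj (x y : R) : 0 <= x -> 0 <= y -> x^2 = y^2 -> x = y.
Proof. intros. nra. Qed.

Lemma RtoC_inj0 (x : R) : RtoC x = RtoC 0 -> x = 0.
Proof. intros h. apply (f_equal fst) in h. simpl in h. auto. Qed.

Lemma fwd_alg (x0 v0 ca sa p q k m1 m2 r : R) : 0<x0 -> 0<v0 -> ca^2+sa^2=1 -> sa<>0 ->
  m1^2+m2^2 <= 1 -> r^2 = 1/2 ->
  (x0-p)^2+(0-q)^2 = (k - m1*x0 - m2*0)^2 ->
  (-x0-p)^2+(0-q)^2 = (k - m1*(-x0) - m2*0)^2 ->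
  (v0*ca-p)^2+(v0*sa-q)^2 = (k - m1*(v0*ca) - m2*(v0*sa))^2 ->
  (-(v0*ca)-p)^2+(-(v0*sa)-q)^2 = (k - m1*(-(v0*ca)) - m2*(-(v0*sa)))^2 ->
  ((x0+v0*ca)*r-p)^2+(v0*sa*r-q)^2 = (k - m1*((x0+v0*ca)*r) - m2*(v0*sa*r))^2 ->
  ((p + x0) ^ 2 + q ^ 2) * ((p - x0) ^ 2 + q ^ 2) = v0 ^ 4.
Proof.
intros hx hv hc hs hm hr Q0 Q1 Q2 Q3 Q4.
assert (ep : p = k*m1).
{ assert (e : 4*x0*(p - k*m1) = 0) by lra.
  apply Rmult_integral in e. destruct e; [lra|lra]. }
subst p.
assert (eq0 : q = k*m2).
{ assert (e : 4*v0*sa*(q - k*m2) = 0) by lra.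
  apply Rmult_integral in e. destruct e as [e|e]; [apply Rmult_integral in e; destruct e; [lra|contradiction]|lra]. }
subst q.
assert (h1 : x0^2*(1-m1^2) = k^2*(1-m1^2-m2^2)) by nra.
assert (h2 : v0^2*(1-(m1*ca+m2*sa)^2) = k^2*(1-m1^2-m2^2)).
{ transitivity (v0^2*(ca^2+sa^2) - v0^2*(m1*ca+m2*sa)^2); [rewrite hc; ring | lra]. }
assert (h3 : ca*(1-m1^2) = m1*m2*sa).
{ assert (e : r^2*(2*x0*v0*(ca*(1-m1^2) - m1*m2*sa)) = 0).
  { replace (v0^2) with (v0^2*(ca^2+sa^2)) in h2 by (rewrite hc; ring). nra. }
  rewrite hr in e. assert (0 < x0*v0) by nra. nra. }
replace (k*m2) with (k*m2) by ring.
apply core with ca sa; auto.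
Qed.

Lemma ss0 (a b : R) : 0 <= a^2 + b^2.
Proof. apply Rplus_le_le_0_compat; apply pow2_ge_0. Qed.

Lemma ssz (a b : R) : a^2 + b^2 = 0 -> a = 0.
Proof. intros h. pose proof (pow2_ge_0 a). pose proof (pow2_ge_0 b).
  assert (a^2 = 0) by lra. destruct (Req_dec a 0) as [e|e]; auto. apply sq_pos in e. lra. Qed.

Lemma pt_key (p q p' q' s x y : R) : 0 < s ->
  sqrt ((x-p)^2 + (y-q)^2) + sqrt ((x-p')^2 + (y-q')^2) = s ->
  sqrt ((x-p)^2 + (y-q)^2) = (s^2 + p^2+q^2-p'^2-q'^2)/(2*s) - ((p-p')/s)*x - ((q-q')/s)*y
  /\ (p-p')^2 + (q-q')^2 <= s^2.
Proof.
intros hs hsum.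
set (A := sqrt ((x-p)^2 + (y-q)^2)) in *.
set (B := sqrt ((x-p')^2 + (y-q')^2)) in *.
assert (hA : A*A = (x-p)^2 + (y-q)^2) by (unfold A; apply sqrt_sqrt; apply Rplus_le_le_0_compat; apply pow2_ge_0).
assert (hB : B*B = (x-p')^2 + (y-q')^2) by (unfold B; apply sqrt_sqrt; apply Rplus_le_le_0_compat; apply pow2_ge_0).
assert (hA0 : 0 <= A) by apply sqrt_pos.
assert (hB0 : 0 <= B) by apply sqrt_pos.
split.
- assert (e : A * (2*s) = s^2 + A*A - B*B) by (rewrite <- hsum; ring).
  rewrite hA, hB in e. apply Rmult_eq_reg_r with (2*s); [|lra].
  rewrite e. field. lra.
- rewrite <- hsum.
  assert (cs : ((x-p)*(x-p') + (y-q)*(y-q'))^2 <= (A*B)^2).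
  { replace ((A*B)^2) with ((A*A)*(B*B)) by ring. rewrite hA, hB.
    pose proof (pow2_ge_0 ((x-p)*(y-q') - (y-q)*(x-p'))). nra. }
  assert (cs2 : -(A*B) <= (x-p)*(x-p') + (y-q)*(y-q')).
  { assert (0 <= A*B) by nra. nra. }
  nra.
Qed.

Lemma fwd x0 v0 a F : 0 < x0 -> 0 < v0 -> is_focus (E x0 v0 a) F -> cassini x0 v0 F.
Proof.
intros hx hv [F' [s hS]]. destruct F as [p q], F' as [p' q']. unfold cassini; cbn [fst snd].
assert (hE : forall t x y, 0 <= t <= 2*PI -> x = x0*cos t + v0*cos a*sin t -> y = v0*sin a*sin t ->
  sqrt ((x-p)^2 + (y-q)^2) + sqrt ((x-p')^2 + (y-q')^2) = s).
{ intros t x y ht ex ey. apply (proj1 (hS (x,y))). exists t. split; auto. rewrite ex, ey. reflexivity. }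
pose proof PI_RGT_0 as hpi.
assert (hu : sqrt ((x0-p)^2 + (0-q)^2) + sqrt ((x0-p')^2 + (0-q')^2) = s).
{ apply (hE 0); [lra| rewrite cos_0, sin_0; ring | rewrite sin_0; ring]. }
assert (hmu : sqrt ((-x0-p)^2 + (0-q)^2) + sqrt ((-x0-p')^2 + (0-q')^2) = s).
{ apply (hE PI); [lra| rewrite cos_PI, sin_PI; ring | rewrite sin_PI; ring]. }
assert (hs : 0 < s).
{ destruct (Rlt_le_dec 0 s) as [h|h]; auto. exfalso.
  pose proof (sqrt_pos ((x0-p)^2 + (0-q)^2)). pose proof (sqrt_pos ((x0-p')^2 + (0-q')^2)).
  pose proof (sqrt_pos ((-x0-p)^2 + (0-q)^2)). pose proof (sqrt_pos ((-x0-p')^2 + (0-q')^2)).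
  assert (e1 : sqrt ((x0-p)^2 + (0-q)^2) = 0) by lra.
  assert (e2 : sqrt ((-x0-p)^2 + (0-q)^2) = 0) by lra.
  apply sqrt_eq_0 in e1; [|apply ss0]. apply sqrt_eq_0 in e2; [|apply ss0].
  apply ssz in e1. apply ssz in e2. lra. }
set (k := (s^2 + p^2+q^2-p'^2-q'^2)/(2*s)).
set (m1 := (p-p')/s). set (m2 := (q-q')/s).
assert (key : forall t x y, 0 <= t <= 2*PI -> x = x0*cos t + v0*cos a*sin t -> y = v0*sin a*sin t ->
  sqrt ((x-p)^2 + (y-q)^2) = k - m1*x - m2*y /\ (x-p)^2 + (y-q)^2 = (k - m1*x - m2*y)^2).
{ intros t x y ht ex ey. destruct (pt_key p q p' q' s x y hs (hE t x y ht ex ey)) as [e _].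
  unfold k, m1, m2. split; [exact e|]. rewrite <- e. rewrite pow2_sqrt; [reflexivity|apply ss0]. }
assert (hm : m1^2 + m2^2 <= 1).
{ destruct (pt_key p q p' q' s x0 0 hs hu) as [_ e]. unfold m1, m2.
  replace (((p - p') / s) ^ 2 + ((q - q') / s) ^ 2) with (((p-p')^2 + (q-q')^2)/s^2) by (field; lra).
  apply Rmult_le_reg_r with (s^2); [nra|]. unfold Rdiv. rewrite Rmult_assoc, Rinv_l; nra. }
assert (hm1d : m1 * s = p - p') by (unfold m1; field; lra).
assert (hm2d : m2 * s = q - q') by (unfold m2; field; lra).
clearbody k m1 m2.
assert (hc : cos a ^2 + sin a ^2 = 1) by apply cs1.
destruct (Req_dec (sin a) 0) as [hsa|hsa].
-
  assert (hca : cos a ^ 2 = 1) by (rewrite hsa in hc; lra).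
  set (R0 := sqrt (x0^2 + v0^2)).
  assert (hR2 : R0 * R0 = x0^2 + v0^2) by (unfold R0; apply sqrt_sqrt; nra).
  assert (hR0 : 0 < R0) by (unfold R0; apply sqrt_lt_R0; nra).
  assert (hRE : forall e : R, e^2 = 1 -> exists t, 0 <= t <= 2*PI /\ e*R0 = x0*cos t + v0*cos a*sin t /\ 0 = v0*sin a*sin t).
  { intros e he. destruct (angle2 (e*x0/R0) (e*cos a*v0/R0)) as [t [ht [e1 e2]]].
    - apply Rmult_eq_reg_r with (R0*R0); [|nra].
      transitivity (e^2*(x0^2 + cos a ^2 * v0^2)/(R0*R0)*(R0*R0)); [field; lra|].
      rewrite he, hca, hR2. field. nra.
    - exists t. split; auto. rewrite e1, e2, hsa. split; [|ring].
      apply Rmult_eq_reg_r with R0; [|lra].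
      transitivity (e*(R0*R0)); [ring|]. rewrite hR2.
      transitivity (e*(x0^2 + cos a^2*v0^2)); [rewrite hca; ring|]. field. lra. }
  destruct (hRE 1) as [t1 [ht1 [ex1 ey1]]]; [ring|].
  destruct (hRE (-1)) as [t2 [ht2 [ex2 ey2]]]; [ring|].
  destruct (key t1 (1*R0) 0 ht1 ex1 ey1) as [A1 B1].
  destruct (key t2 (-1*R0) 0 ht2 ex2 ey2) as [A2 B2].
  assert (Q0 := proj2 (key 0 x0 0 ltac:(lra) ltac:(rewrite cos_0, sin_0; ring) ltac:(rewrite sin_0; ring))).
  assert (Q1 := proj2 (key PI (-x0) 0 ltac:(lra) ltac:(rewrite cos_PI, sin_PI; ring) ltac:(rewrite sin_PI; ring))).
  assert (ep : p = k*m1).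
  { assert (e : 4*x0*(p - k*m1) = 0) by lra.
    apply Rmult_integral in e. destruct e; lra. }
  subst p.
  assert (em : m1^2 = 1).
  { assert (e : v0^2*(1-m1^2) = 0).
    { replace (v0^2) with (R0*R0 - x0^2) by lra. nra. }
    apply Rmult_integral in e. destruct e as [e|e]; [|lra].
    assert (0 < v0^2) by nra. lra. }
  assert (eq0 : q = 0).
  { assert (e : q^2 = 0) by nra.
    destruct (Req_dec q 0) as [e'|e']; auto. apply sq_pos in e'. lra. }
  subst q.
  assert (em2 : m2 = 0).
  { pose proof (pow2_ge_0 m2). assert (e : m2^2 = 0) by lra. destruct (Req_dec m2 0) as [e'|e']; auto. apply sq_pos in e'. lra. }
  subst m2.
  assert (hFE : E x0 v0 a (k*m1, 0)).
  { apply (proj2 (hS (k*m1, 0))). unfold dist2; cbn [fst snd].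
    replace ((k * m1 - k * m1) ^ 2 + (0 - 0) ^ 2) with 0 by ring. rewrite sqrt_0.
    replace ((k * m1 - p') ^ 2 + (0 - q') ^ 2) with (s^2).
    - rewrite Rplus_0_l, sqrt_pow2; lra.
    - rewrite <- hm1d, <- hm2d. replace ((m1*s)^2 + (0*s)^2) with (m1^2*s^2) by ring. rewrite em. ring. }
  destruct hFE as [t [ht hpt]]. injection hpt as hp1 hp2.
  assert (hle : (k*m1)^2 <= R0*R0).
  { rewrite hp1, hR2. pose proof (cs1 t).
    pose proof (pow2_ge_0 (x0*sin t - v0*cos a*cos t)).
    replace (v0^2) with (v0^2*cos a^2) by (rewrite hca; ring). nra. }
  assert (hk : (k*m1)^2 = R0*R0).
  { assert (k >= R0).
    { destruct (Rle_lt_dec 0 m1) as [h|h].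
      - assert (m1 = 1) by nra. subst m1. pose proof (sqrt_pos ((1 * R0 - k * 1) ^ 2 + (0 - 0) ^ 2)). lra.
      - assert (m1 = -1) by nra. subst m1. pose proof (sqrt_pos ((-1 * R0 - k * -1) ^ 2 + (0 - 0) ^ 2)). lra. }
    replace ((k*m1)^2) with (k^2*m1^2) in * by ring. rewrite em in *. nra. }
  replace (((k * m1 + x0) ^ 2 + 0 ^ 2) * ((k * m1 - x0) ^ 2 + 0 ^ 2)) with (((k*m1)^2 - x0^2)^2) by ring.
  rewrite hk, hR2. ring.
- assert (hr2 : (1 / sqrt 2)^2 = 1/2).
  { replace ((1/sqrt 2)^2) with (1/(sqrt 2 * sqrt 2)) by (field; apply sqrt2_neq_0).
    rewrite sqrt_sqrt; lra. }
  apply (fwd_alg x0 v0 (cos a) (sin a) p q k m1 m2 (1/sqrt 2)); auto.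
  + refine (proj2 (key 0 x0 0 _ _ _)); [lra| rewrite cos_0, sin_0; ring | rewrite sin_0; ring].
  + refine (proj2 (key PI (-x0) 0 _ _ _)); [lra| rewrite cos_PI, sin_PI; ring | rewrite sin_PI; ring].
  + refine (proj2 (key (PI/2) (v0*cos a) (v0*sin a) _ _ _)); [lra| rewrite cos_PI2, sin_PI2; ring | rewrite sin_PI2; ring].
  + refine (proj2 (key (PI+PI/2) (-(v0*cos a)) (-(v0*sin a)) _ _ _)); [lra| |].
    * rewrite cos_plus, sin_plus, cos_PI2, sin_PI2, cos_PI, sin_PI; ring.
    * rewrite sin_plus, cos_PI2, sin_PI2, cos_PI, sin_PI; ring.
  + refine (proj2 (key (PI/4) ((x0+v0*cos a)*(1/sqrt 2)) (v0*sin a*(1/sqrt 2)) _ _ _)); [lra| rewrite cos_PI4, sin_PI4; ring | rewrite sin_PI4; ring].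
Qed.

Lemma dist2_Cmod (P F : C) : dist2 P F = Cmod (P - F)%C.
Proof. destruct P, F. reflexivity. Qed.

Lemma focusD x0 v0 a (F : C) : 0 < x0 -> 0 < v0 ->
  (F * F = RtoC x0 * RtoC x0 + RtoC v0 * RtoC v0 * ee (2*a))%C -> is_focus (E x0 v0 a) F.
Proof.
intros hx hv hF.
destruct (csqrt (RtoC x0 + F)%C) as [G hG].
destruct (csqrt (RtoC x0 - F)%C) as [H0 hH0].
assert (hB0 : ((Ci*G*H0)*(Ci*G*H0) = (RtoC v0 * ee a)*(RtoC v0 * ee a))%C).
{ transitivity (Ci*Ci*((G*G)*(H0*H0)))%C; [ring|]. rewrite hG, hH0.
  transitivity (RtoC v0*RtoC v0 * (ee a * ee a))%C; [| ring]. rewrite ee_mult.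
  replace (a+a) with (2*a) by ring. rewrite Ci2.
  transitivity (F * F - RtoC x0 * RtoC x0)%C; [ring|]. rewrite hF. ring. }
assert (hGH : exists H, (H * H = RtoC x0 - F)%C /\ (Ci*G*H = RtoC v0 * ee a)%C).
{ destruct (sq_cases _ _ hB0) as [e|e].
  - exists H0; split; auto.
  - exists (-H0)%C; split.
    + rewrite <- hH0. ring.
    + transitivity (-(Ci*G*H0))%C; [ring|]. rewrite e. ring. }
clear H0 hH0 hB0.
destruct hGH as [H [hH hB]].
set (g := ((G + H) * RtoC (/2))%C).
set (h := ((G - H) * RtoC (/2))%C).
assert (h2 : (RtoC (/2) * RtoC 2 = 1)%C) by (rewrite <- RtoC_mult; f_equal; field).
assert (hg1 : (g*g + h*h = RtoC x0)%C).
{ unfold g, h. transitivity ((G*G+H*H)*(RtoC (/2) * RtoC (/2)) * RtoC 2)%C; [ring|].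
  rewrite hG, hH. transitivity (RtoC x0 * (RtoC (/2) * RtoC 2) * (RtoC (/2) * RtoC 2))%C; [ring|].
  rewrite h2. ring. }
assert (hg2 : (RtoC 2 * g * h = F)%C).
{ unfold g, h. transitivity ((G*G-H*H)*(RtoC (/2) * RtoC 2) * RtoC (/2))%C; [ring|].
  rewrite hG, hH, h2. transitivity (F * (RtoC (/2) * RtoC 2))%C; [ring|]. rewrite h2; ring. }
assert (hg3 : (Ci*(g*g - h*h) = RtoC v0 * ee a)%C).
{ unfold g, h. transitivity (Ci*G*H*(RtoC (/2) * RtoC 2)* (RtoC (/2) * RtoC 2))%C; [ring|].
  rewrite h2, hB. ring. }
assert (zform : forall t, ((x0*cos t + v0*cos a*sin t, v0*sin a*sin t) : C)
   = (g*g*(ee (t/2) * ee (t/2)) + h*h*(ee (-(t/2)) * ee (-(t/2))))%C).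
{ intros t. rewrite !ee_mult. replace (t/2+t/2) with t by field.
  replace (-(t/2) + -(t/2)) with (-t) by field.
  assert (e1 : ee t = (RtoC (cos t) + Ci * RtoC (sin t))%C) by (apply Cext; unfold ee; simpl; ring).
  assert (e2 : ee (-t) = (RtoC (cos t) - Ci * RtoC (sin t))%C)
    by (apply Cext; unfold ee; rewrite cos_neg, sin_neg; simpl; ring).
  rewrite e1, e2.
  transitivity ((g*g+h*h)*RtoC (cos t) + Ci*(g*g-h*h)*RtoC (sin t))%C; [|ring].
  rewrite hg1, hg3. apply Cext; unfold ee; simpl; ring. }
set (s := 2 * (Cmod g ^ 2 + Cmod h ^ 2)).
exists (-F)%C, s. intros P. split.
- intros [t [ht hP]]. rewrite hP, zform. clear hP.
  set (w := ee (t/2)). set (w' := ee (-(t/2))).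
  assert (hww : (w * w' = 1)%C) by apply ee_conj.
  rewrite !dist2_Cmod.
  assert (e1 : (g*g*(w*w) + h*h*(w'*w') - F = (g*w - h*w')*(g*w - h*w'))%C).
  { rewrite <- hg2. transitivity (g*g*(w*w) + h*h*(w'*w') - RtoC 2 * g * h * (w*w'))%C.
    - rewrite hww; ring.
    - ring. }
  assert (e2 : (g*g*(w*w) + h*h*(w'*w') - - F = (g*w + h*w')*(g*w + h*w'))%C).
  { rewrite <- hg2. transitivity (g*g*(w*w) + h*h*(w'*w') + RtoC 2 * g * h * (w*w'))%C.
    - rewrite hww; ring.
    - ring. }
  rewrite e1, e2, !Cmod_sq, para, !Cmod_mult. unfold w, w'. rewrite !Cmod_ee. unfold s. ring.
- intros hd. rewrite !dist2_Cmod in hd.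
  destruct (csqrt (P - F)%C) as [U hU].
  destruct (csqrt (P - - F)%C) as [V hV].
  set (X0 := ((U+V)*RtoC (/2))%C). set (Y0 := ((V-U)*RtoC(/2))%C).
  assert (hX1 : (X0*X0 + Y0*Y0 = P)%C).
  { unfold X0, Y0. transitivity ((U*U + V*V)*(RtoC(/2)*RtoC 2)*RtoC(/2))%C; [ring|].
    rewrite hU, hV, h2. transitivity (P * (RtoC(/2)*RtoC 2))%C; [ring|]. rewrite h2; ring. }
  assert (hX2 : (X0*Y0 = g*h)%C).
  { unfold X0, Y0. transitivity ((V*V - U*U)*RtoC(/2)*RtoC(/2))%C; [ring|].
    rewrite hU, hV, <- hg2. transitivity (g*h*(RtoC(/2)*RtoC 2)*(RtoC(/2)*RtoC 2))%C; [ring|].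
    rewrite h2; ring. }
  assert (hU' : Cmod U ^ 2 = Cmod (P - F)%C) by (rewrite <- Cmod_sq, hU; reflexivity).
  assert (hV' : Cmod V ^ 2 = Cmod (P - - F)%C) by (rewrite <- Cmod_sq, hV; reflexivity).
  assert (hn : Cmod X0 ^2 + Cmod Y0 ^2 = Cmod g ^2 + Cmod h^2).
  { unfold X0, Y0. rewrite !Cmod_mult, Cmod_R, Rabs_pos_eq by lra.
    replace (U+V)%C with (V+U)%C by ring.
    replace ((Cmod (V + U) * / 2) ^ 2 + (Cmod (V - U) * / 2) ^ 2) with
      ((Cmod (V - U) ^ 2 + Cmod (V + U) ^ 2)/4) by field.
    rewrite para, hU', hV'. unfold s in hd. lra. }
  assert (hp : Cmod X0 ^2 * Cmod Y0 ^2 = Cmod g ^2 * Cmod h^2).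
  { rewrite <- !Rpow_mult_distr, <- !Cmod_mult, hX2. reflexivity. }
  assert (hq : (Cmod X0 ^2 - Cmod g ^2) * (Cmod X0 ^2 - Cmod h ^2) = 0).
  { set (a1 := Cmod X0 ^2) in *. set (b1 := Cmod Y0 ^2) in *.
    set (g1 := Cmod g ^2) in *. set (h1 := Cmod h ^2) in *.
    transitivity (a1*a1 - a1*(g1+h1) + g1*h1); [ring|]. rewrite <- hn, <- hp. ring. }
  assert (hXY : exists X Y, (X*X + Y*Y = P)%C /\ (X*Y = g*h)%C /\ Cmod X = Cmod g /\ Cmod Y = Cmod h).
  { apply Rmult_integral in hq. destruct hq as [e|e].
    - exists X0, Y0. repeat split; auto.
      + apply sq_inj; try apply Cmod_ge_0. lra.
      + apply sq_inj; try apply Cmod_ge_0. lra.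
    - exists Y0, X0. repeat split.
      + rewrite <- hX1. ring.
      + rewrite <- hX2. ring.
      + apply sq_inj; try apply Cmod_ge_0. lra.
      + apply sq_inj; try apply Cmod_ge_0. lra. }
  clear X0 Y0 hX1 hX2 hn hp hq.
  destruct hXY as [X [Y [hP1 [hP2 [hm1 hm2]]]]].
  assert (hom : exists w, Cmod w = 1 /\ @eq C P (g*g*(w*w) + h*h*(Cconj w * Cconj w))%C).
  { destruct (classic (g = RtoC 0)) as [eg|eg].
    - assert (eX : X = RtoC 0) by (apply Cmod_eq_0; rewrite hm1, eg, Cmod_0; reflexivity).
      assert (eh : h <> RtoC 0).
      { intros e. rewrite eg, e in hg1.
        assert (e2 : RtoC x0 = RtoC 0) by (rewrite <- hg1; ring).
        apply RtoC_inj0 in e2. lra. }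
      assert (ehm : Cmod h <> 0) by (intro e; apply eh; apply Cmod_eq_0; auto).
      exists (Cconj (Y / h)). split.
      + rewrite Cmod_conj, Cmod_div by auto. rewrite hm2. field. exact ehm.
      + rewrite Cconj_conj, <- hP1, eX, eg. field. exact eh.
    - assert (ehm : Cmod g <> 0) by (intro e; apply eg; apply Cmod_eq_0; auto).
      assert (eX : X <> RtoC 0) by (intro e; apply ehm; rewrite <- hm1, e, Cmod_0; reflexivity).
      assert (hm : Cmod (X / g) = 1) by (rewrite Cmod_div by auto; rewrite hm1; field; auto).
      exists (X / g)%C. split; auto.
      assert (hw1 : (X / g * Cconj (X / g) = 1)%C).
      { rewrite <- Cmod2_conj, hm. apply Cext; simpl; ring. }
      assert (hc : Cconj (X / g) = (g / X)%C).
      { transitivity (/(X/g) * (X / g * Cconj (X / g)))%C.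
        - field. split; auto.
        - rewrite hw1. field. split; auto. }
      assert (hY : Y = (g*h/X)%C).
      { rewrite <- hP2. field. auto. }
      rewrite hc, <- hP1, hY. field. split; auto. }
  destruct hom as [w [hw hPw]].
  destruct w as [c d].
  assert (hcd : c^2 + d^2 = 1) by (pose proof (Cmod2 (c,d)) as e; cbn [fst snd] in e; rewrite hw in e; lra).
  assert (hth : exists th, (0 <= th <= PI) /\ @eq C (ee th * ee th)%C (Cmult (c,d) (c,d)) /\
             @eq C (ee (-th) * ee (-th))%C (Cmult (Cconj (c,d)) (Cconj (c,d)))).
  { destruct (Rle_lt_dec 0 d) as [hd0|hd0].
    - destruct (angle0 c d hcd hd0) as [th [h1 [h3 h4]]].
      assert (e : ee th = (c,d)) by (unfold ee; rewrite h3, h4; reflexivity).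
      exists th. split; auto. rewrite <- ee_Cconj, e. split; reflexivity.
    - destruct (angle0 (-c) (-d)) as [th [h1 [h3 h4]]]; [nra|lra|].
      assert (e : ee th = (-(c,d))%C) by (unfold ee; rewrite h3, h4; reflexivity).
      exists th. split; auto. rewrite <- ee_Cconj, e. split; [ring|].
      rewrite Copp_conj. ring. }
  destruct hth as [th [hth [e1 e2]]].
  exists (2*th). split; [lra|].
  rewrite zform. replace (2*th/2) with th by field. rewrite e1, e2. exact hPw.
Qed.

Lemma cass_angle x0 v0 (F : C) : 0 < x0 -> 0 < v0 -> cassini x0 v0 F ->
  exists a, -(PI/2) <= a <= PI/2 /\ (F * F = RtoC x0 * RtoC x0 + RtoC v0 * RtoC v0 * ee (2*a))%C.
Proof.
intros hx hv hc. destruct F as [p q]. unfold cassini in hc; cbn [fst snd] in hc.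
assert (hV : 0 < v0^2) by nra.
assert (h1 : ((p^2-q^2-x0^2)/v0^2)^2 + (2*p*q/v0^2)^2 = 1).
{ replace (((p^2-q^2-x0^2)/v0^2)^2 + (2*p*q/v0^2)^2) with
    (((p + x0) ^ 2 + q ^ 2) * ((p - x0) ^ 2 + q ^ 2) / (v0^4)) by (field; lra).
  rewrite hc. field. lra. }
destruct (angle1 _ _ h1) as [th [hth [e1 e2]]].
exists (th/2). split; [lra|]. replace (2*(th/2)) with th by field.
apply Cext; unfold ee; simpl; rewrite e1, e2; field; lra.
Qed.

Lemma cassini_iff x0 v0 P : 0 < x0 -> 0 < v0 -> (foci_locus x0 v0 P <-> cassini x0 v0 P).
Proof.
intros hx hv. split.
- intros [a [ha hf]]. apply (fwd x0 v0 a); auto.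
- intros hc. destruct (cass_angle x0 v0 P hx hv hc) as [a [ha e]].
  exists a. pose proof PI_RGT_0. split; [lra|]. apply focusD; auto.
Qed.

Lemma cart x0 v0 x y : cassini x0 v0 (x, y) <->
     (x ^ 2 + y ^ 2) ^ 2 - 2 * x0 ^ 2 * (x ^ 2 - y ^ 2) = v0 ^ 4 - x0 ^ 4.
Proof.
unfold cassini; cbn [fst snd].
assert (e : ((x + x0) ^ 2 + y ^ 2) * ((x - x0) ^ 2 + y ^ 2) =
   (x ^ 2 + y ^ 2) ^ 2 - 2 * x0 ^ 2 * (x ^ 2 - y ^ 2) + x0^4) by ring.
rewrite e. split; intros; lra.
Qed.

Lemma polar x0 v0 r th : cassini x0 v0 (r * cos th, r * sin th) <->
      r ^ 4 - 2 * x0 ^ 2 * r ^ 2 * cos (2 * th) = v0 ^ 4 - x0 ^ 4.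
Proof.
rewrite cart.
assert (e : (r * cos th) ^ 2 + (r * sin th) ^ 2 = r^2).
{ transitivity (r^2 * (cos th ^2 + sin th ^2)); [ring|]. rewrite cs1; ring. }
rewrite e, cos_2a.
replace ((r * cos th) ^ 2 - (r * sin th) ^ 2) with (r^2 * (cos th * cos th - sin th * sin th)) by ring.
replace ((r^2)^2) with (r^4) by ring.
split; intros h; rewrite <- h; ring.
Qed.

Lemma safety x0 v0 x y : 0 < x0 -> 0 < v0 -> cassini x0 v0 (x, y) ->
     x ^ 2 / (x0 ^ 2 + v0 ^ 2) + y ^ 2 / v0 ^ 2 <= 1.
Proof.
intros hx hv hc. apply cart in hc.
set (K := x0^2) in *. set (V := v0^2).
assert (hK : 0 < K) by (unfold K; nra). assert (hV0 : 0 < V) by (unfold V; nra).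
set (X := x^2) in *. set (Y := y^2) in *.
assert (hX : 0 <= X) by apply pow2_ge_0. assert (hY : 0 <= Y) by apply pow2_ge_0.
set (u := X + Y). set (w := X - Y).
assert (hC : u^2 - 2*K*w + K^2 - V^2 = 0).
{ unfold u, w. replace (V^2) with (v0^4) by (unfold V; ring). replace (K^2) with (x0^4) by (unfold K; ring).
  lra. }
assert (hu : u <= K + V).
{ assert (hw : w <= u) by (unfold u, w; lra).
  assert ((u - K)^2 <= V^2) by nra. nra. }
assert (hT : 0 <= V*(K+V) - V*X - (K+V)*Y).
{ assert (e : 4*(V*(K+V) - V*X - (K+V)*Y) = (u-K-3*V)*(u-K-V) - (u^2 - 2*K*w + K^2 - V^2))
    by (unfold u, w; ring).
  assert (0 <= (u-K-3*V)*(u-K-V)) by nra. lra. }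
apply Rmult_le_reg_r with (V*(K+V)); [nra|].
replace ((X / (K + V) + Y / V) * (V * (K + V))) with (V*X + (K+V)*Y) by (field; lra).
lra.
Qed.

Lemma lem_pt x0 r a : r^2 = 2*x0^2*cos a ->
  @eq C (Cmult (r*cos (a/2), r*sin (a/2)) (r*cos (a/2), r*sin (a/2))) (RtoC x0 * RtoC x0 + RtoC x0 * RtoC x0 * ee (2*a))%C.
Proof.
intros h. set (b := a/2). assert (ea : a = 2*b) by (unfold b; field). rewrite ea in h |- *.
apply Cext; unfold ee; simpl.
- rewrite (cos_2a_cos (2*b)).
  transitivity (r^2 * (cos b * cos b - sin b * sin b)); [ring|]. rewrite h, <- cos_2a. ring.
- rewrite (sin_2a (2*b)).
  transitivity (r^2 * (2*sin b * cos b)); [ring|]. rewrite h, <- sin_2a. ring.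
Qed.

Theorem mainTheorem1 (x0 v0 : R) (hx0 : 0 < x0) (hv0 : 0 < v0) :
  (* the foci of the E_alpha trace exactly the Cassini oval *)
  (forall P, foci_locus x0 v0 P <-> cassini x0 v0 P) /\
  (* equivalent Cartesian equation *)
  (forall x y, cassini x0 v0 (x, y) <->
     (x ^ 2 + y ^ 2) ^ 2 - 2 * x0 ^ 2 * (x ^ 2 - y ^ 2) = v0 ^ 4 - x0 ^ 4) /\
  (* polar equation *)
  (forall r th, 0 <= r ->
     (cassini x0 v0 (r * cos th, r * sin th) <->
      r ^ 4 - 2 * x0 ^ 2 * r ^ 2 * cos (2 * th) = v0 ^ 4 - x0 ^ 4)) /\
  (* the oval lies inside the ellipse of safety ... *)
  (forall x y, cassini x0 v0 (x, y) ->
     x ^ 2 / (x0 ^ 2 + v0 ^ 2) + y ^ 2 / v0 ^ 2 <= 1) /\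
  (* ... symmetrically (with respect to both axes) *)
  (forall x y, cassini x0 v0 (x, y) ->
     cassini x0 v0 (- x, y) /\ cassini x0 v0 (x, - y)) /\
  (* the case x0 = v0: Bernoulli's lemniscate *)
  (x0 = v0 ->
     (forall x y, foci_locus x0 v0 (x, y) <->
        (x ^ 2 + y ^ 2) ^ 2 = 2 * x0 ^ 2 * (x ^ 2 - y ^ 2)) /\
     (forall P, foci_locus x0 v0 P <->
        exists r th, - (PI / 4) <= th <= PI / 4 /\
          r ^ 2 = 2 * x0 ^ 2 * cos (2 * th) /\ P = (r * cos th, r * sin th)) /\
     (* alpha = 2 theta: E_alpha has a focus with polar angle alpha/2 and
        r^2 = 2 x0^2 cos alpha *)
     (forall a, - (PI / 2) <= a <= PI / 2 ->
        is_focus (E x0 v0 a)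
          (sqrt (2 * x0 ^ 2 * cos a) * cos (a / 2),
           sqrt (2 * x0 ^ 2 * cos a) * sin (a / 2))) /\
     (forall P, foci_locus x0 v0 P <->
        exists r a, - (PI / 2) <= a <= PI / 2 /\
          r ^ 2 = 2 * x0 ^ 2 * cos a /\ P = (r * cos (a / 2), r * sin (a / 2)))).
Proof.
pose proof PI_RGT_0 as hpi.
split; [intros P; apply cassini_iff; auto|].
split; [intros x y; apply cart|].
split; [intros r th _; apply polar|].
split; [intros x y; apply safety; auto|].
split.
{ intros x y h. unfold cassini in *; cbn [fst snd] in *. split; rewrite <- h; ring. }
intros e. subst v0.
assert (L4 : forall P, foci_locus x0 x0 P <-> exists r a, -(PI/2) <= a <= PI/2 /\
   r^2 = 2*x0^2*cos a /\ P = (r*cos (a/2), r*sin(a/2))).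
{ intros P. split.
  - intros hf. apply cassini_iff in hf; auto.
    destruct (cass_angle x0 x0 P hx0 hx0 hf) as [a [ha e]].
    assert (hca : 0 <= cos a) by (apply cos_ge_0; lra).
    set (r0 := sqrt (2*x0^2*cos a)).
    assert (hr0 : r0^2 = 2*x0^2*cos a) by (unfold r0; apply pow2_sqrt; nra).
    pose proof (lem_pt x0 r0 a hr0) as e2. rewrite <- e in e2.
    destruct (sq_cases _ _ (eq_sym e2)) as [e3|e3].
    + exists r0, a. split; [lra|]. split; [exact hr0|]. exact e3.
    + exists (-r0), a. split; [lra|]. split; [rewrite <- hr0; ring|].
      rewrite e3. apply Cext; simpl; ring.
  - intros [r [a [ha [hr e]]]]. exists a. split; [lra|]. rewrite e.
    apply focusD; auto. apply lem_pt; auto. }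
split.
{ intros x y. rewrite cassini_iff by auto. rewrite cart. split; intros h; lra. }
split.
{ intros P. rewrite L4. split.
  - intros [r [a [ha [hr e]]]]. exists r, (a/2). split; [lra|].
    replace (2*(a/2)) with a by field. auto.
  - intros [r [th [hth [hr e]]]]. exists r, (2*th). split; [lra|].
    replace (2*th/2) with th by field. auto. }
split.
{ intros a ha. apply focusD; auto. apply lem_pt.
  assert (hca : 0 <= cos a) by (apply cos_ge_0; lra). apply pow2_sqrt; nra. }
exact L4.
Qed.
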